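(* For every network $\mathcal N$ with character $D^*$, the rate region $\mathcal R^{\mathcal N}$ equals the closure of $\bigcup_{T=1}^{\infty}\frac{T}{T+D^*}\,\widetilde{\mathcal R}^{\mathcal N^T}$.
   Context: A network is a triple $\mathcal N=(\mathcal L,\mathcal I,D_{\mathcal L})$ where $\mathcal L$ is a finite nonempty set (of links); $\mathcal I=(\mathcal I(l))_{l\in\mathcal L}$ is the collision profile, each $\mathcal I(l)$ being a collection of nonempty subsets of $\mathcal L$; and $D_{\mathcal L}$ assigns an integer $D_{\mathcal L}(l,l')$ to every pair $(l,l')$ with $l'\in\phi$ for some $\phi\in\mathcal I(l)$. The character is $D^*=\max_{l\in\mathcal L}\max_{\phi\in\mathcal I(l)}\max_{l'\in\phi}|D_{\mathcal L}(l,l')|$ (0 if there are no collision sets). A schedule is a map $S:\mathcal L\times\mathbb Z\to\{0,1\}$; $S(l,t)$ has a collision if there exists $\phi\in\mathcal I(l)$ with $S(l',t+D_{\mathcal L}(l,l'))=1$ for all $l'\in\phi$, otherwise it is collision free. $R_S(l)=\lim_{T\to\infty}\frac1T\sum_{t=0}^{T-1}\iota\big(S(l,t)=1\text{ and collision free}\big)$ when the limit exists; $R_S=(R_S(l))_l$ is the rate vector when all limits exist. A nonnegative vector $R\in[0,\infty)^{\mathcal L}$ is achievable if for every $\epsilon>0$ some schedule $S$ has a rate vector with $R_S(l)\ge R(l)-\epsilon$ for all $l$; $\mathcal R^{\mathcal N}$ is the set of achievable nonnegative vectors. For an integer $T\ge1$, an independent set of $\mathcal N^T$ is a binary $|\mathcal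 L|\times T$ matrix $A$ (columns indexed $0,\dots,T-1$) such that there is no $(l,t)$ and $\phi\in\mathcal I(l)$ with $A(l,t)=1$ and, for every $l'\in\phi$, $0\le t+D_{\mathcal L}(l,l')\le T-1$ and $A(l',t+D_{\mathcal L}(l,l'))=1$. Its rate vector is $\frac1T A\mathbf 1$ (the sum of the columns divided by $T$). $\widetilde{\mathcal R}^{\mathcal N^T}$ is the convex hull of the rate vectors of all independent sets of $\mathcal N^T$. *)

(* Defs.v *)
From HB Require Import structures.
From mathcomp Require Import all_boot all_order all_algebra.
From mathcomp Require Import all_classical all_reals all_analysis.
Set Implicit Arguments. Unset Strict Implicit. Unset Printing Implicit Defensive.
Import Order.TTheory GRing.Theory Num.Theory.
Import numFieldTopology.Exports numFieldNormedType.Exports.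
Local Open Scope ring_scope.
Local Open Scope classical_set_scope.

(* A network is given by: a finite type of links [L] (nonempty, required as a
   hypothesis of the theorem), a collision profile [I : L -> {set {set L}}]
   (each collision set nonempty, also a hypothesis), and delays
   [D : L -> L -> int] (only the values D l l' with l' in some phi in I l matter). *)

Section Network.
Variables (L : finType) (I : L -> {set {set L}}) (D : L -> L -> int).

Definition character : nat :=
  \max_(l : L) \max_(phi in I l) \max_(l' in phi) absz (D l l').

Definition schedule := L -> int -> bool.

Definition has_collision (S : schedule) (l : L) (t : int) : bool :=
  [exists phi in I l, [forall l' in phi, S l' (t + D l l')]].

Definition success (S : schedule) (l : L) (t : int) : bool :=
  S l t && ~~ has_collision S l t.

Variable R : realType.

Definition partial_rate (S : schedule) (l : L) (T : nat) : R :=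
  (\sum_(t < T) (success S l (t%:Z) : nat)%:R) / T%:R.

Definition is_rate_vector (S : schedule) (r : L -> R) : Prop :=
  forall l, partial_rate S l @ \oo --> r l.

Definition achievable (x : L -> R) : Prop :=
  forall eps : R, 0 < eps -> exists S : schedule, exists r : L -> R,
    is_rate_vector S r /\ forall l, x l - eps <= r l.

Definition rate_region : set (L -> R) :=
  [set x | (forall l, 0 <= x l) /\ achievable x].

(* binary |L| x T matrices, and reading entry (l, s) at an integer time s
   (false when s is outside [0, T-1]) *)
Definition bmatrix (T : nat) := {ffun L * 'I_T -> bool}.

Definition entry_at (T : nat) (A : bmatrix T) (l : L) (s : int) : bool :=
  [exists t : 'I_T, (s == (nat_of_ord t)%:Z) && A (l, t)].

Definition independent (T : nat) (A : bmatrix T) : bool :=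
  ~~ [exists l : L, exists t : 'I_T, exists phi in I l,
        A (l, t) && [forall l' in phi, entry_at A l' ((nat_of_ord t)%:Z + D l l')]].

Definition mrate (T : nat) (A : bmatrix T) : L -> R :=
  fun l => (\sum_(t < T) (A (l, t) : nat))%:R / T%:R.

Definition conv_rates (T : nat) : set (L -> R) :=
  [set x | exists w : bmatrix T -> R,
     (forall A, 0 <= w A) /\ (forall A, ~~ independent A -> w A = 0) /\
     \sum_(A : bmatrix T) w A = 1 /\
     forall l, x l = \sum_(A : bmatrix T) w A * mrate A l].

Definition scaled_conv_rates (T : nat) : set (L -> R) :=
  [set (T%:R / (T + character)%:R) *: x | x in conv_rates T].

End Network.

(* Main.v *)
Require Import Defs.
From HB Require Import structures.
From mathcomp Require Import all_boot all_order all_algebra.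
From mathcomp Require Import all_classical all_reals all_analysis.
From mathcomp Require Import zify ring lra.
Import Order.TTheory GRing.Theory Num.Theory.
Import numFieldTopology.Exports numFieldNormedType.Exports.
Local Open Scope ring_scope.
Local Open Scope classical_set_scope.
Set Implicit Arguments. Unset Strict Implicit. Unset Printing Implicit Defensive.
Lemma divmodz_small (q r g : int) : 0 <= r < g ->
  ((q * g + r) %/ g)%Z = q /\ ((q * g + r) %% g)%Z = r.
Proof.
move=> /andP [r0 rg]; have g0 : g != 0 by apply/negP => /eqP g0; move: rg; rewrite g0; lia.
split.
  rewrite divzMDl // divz_small ?addr0 //; apply/andP; split => //; lia.
by rewrite modzMDl modz_small // r0 rg.
Qed.

Lemma ptws_cvg (R : realType) (L : finType) (F : set_system {ptws L -> R}) (f : {ptws L -> R}) :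
  Filter F -> (forall l, (fun g : L -> R => g l) @ F --> f l) -> F --> f.
Proof.
move=> FF H.
have surj i : [set (g : {ptws L -> R}) i | g in [set: {ptws L -> R}]] = [set: R].
  by rewrite eqEsubset; split => // y _; exists (fun _ => y).
apply/cvg_sup => i; apply/cvg_image => //.
move=> B /H /= FB; exists ((fun g : {ptws L -> R} => g i) @^-1` B) => //.
by rewrite image_preimage.
Qed.

Lemma ptws_box (R : realType) (L : finType) (x : {ptws L -> R}) (eps : R) :
  0 < eps -> nbhs x [set y : {ptws L -> R} | forall l, `|x l - y l| < eps].
Proof.
move=> e0.
have H : forall l, nbhs x [set y : {ptws L -> R} | `|x l - y l| < eps].
  move=> l.
  have := @proj_continuous L (fun=> R) l x.
  move=> /(_ (ball (x l) eps)) /=; apply.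
  exact: nbhsx_ballx.
have := @filter_forall _ L (fun l (y: {ptws L -> R}) => `|x l - y l| < eps) (nbhs x) _ H.
by apply; apply: nbhs_filter.
Qed.

Lemma closure_box (R : realType) (L : finType) (U : set {ptws L -> R}) (x : {ptws L -> R}) :
  closure U x <-> forall eps : R, 0 < eps -> exists y, U y /\ forall l, `|x l - y l| < eps.
Proof.
split.
  move=> cx eps e0; have [y [Uy By]] := cx _ (@ptws_box R L x eps e0).
  by exists y.
move=> H.
have /choice [y Hy] : forall n : nat, exists y, U y /\ forall l, `|x l - y l| < n.+1%:R^-1.
  by move=> n; apply: H.
rewrite closureEcvg; exists (y @ \oo); first exact: fmap_proper_filter.
split.
  apply: ptws_cvg => l.
  apply/cvgrPdist_lt => e e0.
  have := near_infty_natSinv_lt (PosNum e0).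
  apply: filterS => n /= hn.
  exact: lt_trans (proj2 (Hy n) l) hn.
move=> A /= gA.
by exists 0%N => // n _; apply: gA; exact: (proj1 (Hy n)).
Qed.

Lemma sum_shift (f : nat -> nat) P n : (forall m, f (m + P) = f m) ->
  (\sum_(t < P + n) f t = \sum_(t < P) f t + \sum_(t < n) f t)%N.
Proof.
move=> hp; rewrite big_split_ord /=; congr (_ + _)%N.
by apply: eq_bigr => i _; rewrite /= addnC hp.
Qed.

Lemma sum_period (f : nat -> nat) P q r : (forall m, f (m + P) = f m) ->
  (\sum_(t < q * P + r) f t = q * \sum_(t < P) f t + \sum_(t < r) f t)%N.
Proof.
move=> hp; elim: q => [|q IH]; first by rewrite !mul0n add0n.
by rewrite mulSn -addnA sum_shift // IH mulSn addnA.
Qed.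

Lemma sum_le1 (f : nat -> nat) n : (forall m, f m <= 1)%N -> (\sum_(t < n) f t <= n)%N.
Proof.
move=> h; apply: (@leq_trans (\sum_(t < n) 1)%N).
  by apply: leq_sum => i _; exact: h.
by rewrite sum_nat_const card_ord muln1.
Qed.

Lemma periodic_cvg (R : realType) (f : nat -> nat) P : (0 < P)%N ->
  (forall n, f n <= 1)%N -> (forall n, f (n + P)%N = f n) ->
  (fun n => (\sum_(t < n) f t)%:R / n%:R : R) @ \oo -->
    ((\sum_(t < P) f t)%:R / P%:R : R).
Proof.
move=> P0 f1 hp.
apply/cvgrPdist_le => eps e0.
exists (Num.truncn (P%:R / eps)).+1 => // n /= hn.
have n0 : (0 < n)%N by lia.
have nR : P%:R / eps < n%:R.
  apply: lt_le_trans (truncnS_gt _) _; rewrite ler_nat; exact: hn.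
have hn' : n = (n %/ P * P + n %% P)%N by rewrite -divn_eq.
have hS := sum_period (n %/ P) (n %% P) hp.
rewrite -hn' in hS; rewrite hS.
have hr : (n %% P < P)%N by rewrite ltn_mod.
have he := sum_le1 (n %% P) f1.
have hC := sum_le1 P f1.
move: hr he hC hn'.
set q := (n %/ P)%N; set r := (n %% P)%N; set e := (\sum_(t < r) f t)%N.
set C := (\sum_(t < P) f t)%N => hr he hC hn'.
have pR : (0 : R) < P%:R by rewrite ltr0n.
have nR0 : (0 : R) < n%:R by rewrite ltr0n.
have hnr : (n%:R : R) = q%:R * P%:R + r%:R by rewrite hn' natrD natrM.
have heR : (e%:R : R) <= r%:R by rewrite ler_nat.
have hCR : (C%:R : R) <= P%:R by rewrite ler_nat.
have hrR : (r%:R : R) <= P%:R by rewrite ler_nat ltnW.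
have -> : C%:R / P%:R - (q * C + e)%:R / n%:R =
   (C%:R * r%:R - e%:R * P%:R) / (P%:R * n%:R) :> R.
  rewrite natrD natrM hnr; field.
  by apply/andP; split; rewrite gt_eqF // -hnr.
rewrite normrM (ger0_norm (x := (P%:R * n%:R)^-1)); last by rewrite invr_ge0 mulr_ge0 // ltW.
rewrite ler_pdivrMr ?mulr_gt0 //.
apply: le_trans (_ : P%:R * P%:R <= _).
  rewrite ler_norml; apply/andP; split.
    have : (0 : R) <= C%:R * r%:R by rewrite mulr_ge0.
    have : e%:R * P%:R <= P%:R * P%:R :> R by rewrite ler_pM2r // (le_trans heR hrR).
    lra.
  have : C%:R * r%:R <= P%:R * P%:R :> R by apply: ler_pM.
  have : (0 : R) <= e%:R * P%:R by rewrite mulr_ge0.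
  lra.
have h1 : P%:R <= eps * n%:R :> R.
  by move: nR; rewrite ltr_pdivrMr // => /ltW; rewrite mulrC.
by rewrite mulrCA ler_pM2l.
Qed.

Section Comb.
Variables (L : finType) (I : L -> {set {set L}}) (D : L -> L -> int).
Local Notation Dc := (character I D).

Lemma D_le_char l phi l' : phi \in I l -> l' \in phi -> (absz (D l l') <= Dc)%N.
Proof.
move=> hphi hl'; rewrite /character.
apply: leq_trans (leq_bigmax l).
apply: leq_trans (leq_bigmax_cond _ hphi).
exact: (leq_bigmax_cond _ hl').
Qed.

Lemma entry_atP T (A : bmatrix L T) l (s : int) :
  entry_at A l s -> exists t : 'I_T, s = (t : nat)%:Z /\ A (l, t).
Proof. by move=> /existsP [t /andP [/eqP -> h]]; exists t. Qed.

Lemma entry_at_ge T (A : bmatrix L T) l (s : int) : (T%:Z <= s)%R -> entry_at A l s = false.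
Proof.
move=> hs; apply/negbTE/negP => /entry_atP [t [hst _]].
move: hs; rewrite hst lez_nat leqNgt ltn_ord //.
Qed.

Lemma entry_at_nat T (A : bmatrix L T) l (t : 'I_T) : entry_at A l (t : nat)%:Z = A (l, t).
Proof.
apply/idP/idP; first by move=> /entry_atP [t' [/eqP]]; rewrite eqz_nat => /eqP /val_inj ->.
by move=> h; apply/existsP; exists t; rewrite eqxx h.
Qed.

Lemma indep_of_success T (S : schedule L) (A : bmatrix L T) :
  (forall l t, A (l, t) -> success I D S l (t : nat)%:Z) -> independent I D A.
Proof.
move=> hA; apply/negP => /existsP [l /existsP [t /existsP [phi /andP [phiI /andP [Alt /forallP Hall]]]]].
move: (hA _ _ Alt); rewrite /success => /andP [_ /negP]; apply.
apply/existsP; exists phi; rewrite phiI /=; apply/forallP => l'; apply/implyP => l'phi.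
move: (Hall l'); rewrite l'phi /= => /entry_atP [t' [-> At']].
by move: (hA _ _ At') => /andP [].
Qed.

Lemma prefix_hit (f : nat -> bool) (T k : nat) :
  (k <= \sum_(t < T) (f t : nat))%N -> exists2 m, (m <= T)%N & (\sum_(t < m) (f t : nat))%N = k.
Proof.
elim: T k => [|T IH] k.
  by rewrite big_ord0 leqn0 => /eqP ->; exists 0%N => //; rewrite big_ord0.
rewrite big_ord_recr /= => hk.
have [hk'|hk'] := leqP k (\sum_(t < T) (f t : nat))%N.
  by have [m hm1 hm2] := IH _ hk'; exists m => //; apply: leqW.
exists T.+1 => //; rewrite big_ord_recr /=.
move: hk hk'; case: (f T) => /=; lia.
Qed.

Lemma trunc_sum (f : nat -> bool) (T m : nat) : (m <= T)%N ->
  (\sum_(t < T) (f t && (t < m)%N : nat))%N = (\sum_(t < m) (f t : nat))%N.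
Proof.
move=> hm; rewrite (big_ord_widen _ (fun t => (f t : nat)) hm) /=.
rewrite [RHS]big_mkcond; apply: eq_bigr => i _; by case: (f i); case: (i < m)%N.
Qed.

Definition sched T (M : int -> bmatrix L T) : schedule L :=
  fun l t => entry_at (M (t %/ (T + Dc)%N%:Z)%Z) l (t %% (T + Dc)%N%:Z)%Z.

Lemma sched_success T (M : int -> bmatrix L T) :
  (forall q, independent I D (M q)) ->
  forall l t, success I D (sched M) l t = sched M l t.
Proof.
move=> Hind l t; rewrite /success; case Hs: (sched M l t) => //=.
set g := (T + Dc)%N%:Z.
move: (Hs); rewrite /sched -/g => /entry_atP [t' [ho Mt']].
set q := (t %/ g)%Z in Mt' ho.
have ht : t = q * g + (t' : nat)%:Z by rewrite -ho; exact: divz_eq.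
have tT : ((t' : nat) < T)%N := ltn_ord t'.
apply/negP => /existsP [phi /andP [phiI /forallP Hall]].
move: (Hind q); rewrite /independent => /negP; apply.
apply/existsP; exists l; apply/existsP; exists t'; apply/existsP; exists phi.
rewrite phiI Mt' /=; apply/forallP => l'; apply/implyP => l'phi.
have hd := D_le_char phiI l'phi.
move: (Hall l'); rewrite l'phi /= /sched -/g.
set d := D l l' in hd *.
have [h0|h0] := leP 0 ((t' : nat)%:Z + d).
  have [-> ->] : ((t + d) %/ g)%Z = q /\ ((t + d) %% g)%Z = (t' : nat)%:Z + d.
    rewrite ht -addrA; apply: divmodz_small; rewrite h0 /= /g; lia.
  by [].
have [_ ->] : ((t + d) %/ g)%Z = q - 1 /\ ((t + d) %% g)%Z = g + (t' : nat)%:Z + d.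
  have -> : t + d = (q - 1) * g + (g + (t' : nat)%:Z + d) by rewrite ht; ring.
  apply: divmodz_small; rewrite /g; lia.
by rewrite entry_at_ge // /g; lia.
Qed.

Section Per.
Definition rowcount T (A : bmatrix L T) l := (\sum_(t < T) (A (l, t) : nat))%N.

Variables (T N : nat) (Mb : nat -> bmatrix L T).
Hypothesis T0 : (0 < T)%N.
Definition Mper (q : int) : bmatrix L T := Mb (absz (q %% N%:Z)%Z).

Lemma sched_period l n :
  sched Mper l ((n + N * (T + Dc))%N)%:Z = sched Mper l n%:Z.
Proof.
rewrite /sched /Mper addnC PoszD PoszM.
have g0 : (T + Dc)%N%:Z != 0 by rewrite eqz_nat; lia.
rewrite divzMDl // modzMDl; congr (entry_at (Mb _) _ _).
by rewrite modzDl.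
Qed.

Lemma sched_block l b o : (o < T + Dc)%N ->
  sched Mper l ((b * (T + Dc) + o)%N)%:Z = entry_at (Mper b%:Z) l o%:Z.
Proof.
move=> ho; rewrite /sched PoszD PoszM.
have H : 0 <= o%:Z < (T + Dc)%N%:Z by rewrite lez_nat ltz_nat ho.
by have [-> ->] := divmodz_small b%:Z H.
Qed.

Lemma sum_entry (A : bmatrix L T) l :
  (\sum_(o < T + Dc) (entry_at A l o%:Z : nat))%N = rowcount A l.
Proof.
rewrite -(big_mkord xpredT (fun o => (entry_at A l o%:Z : nat))).
rewrite (big_cat_nat _ (n := T)) //=; last by lia.
rewrite [X in (_ + X)%N]big1_seq ?addn0; last first.
  move=> i /andP [_]; rewrite mem_index_iota => /andP [hi _].
  by rewrite entry_at_ge // lez_nat.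
rewrite big_mkord; apply: eq_bigr => i _.
by rewrite entry_at_nat.
Qed.

Lemma period_count l :
  (\sum_(t < N * (T + Dc)) (sched Mper l t%:Z : nat))%N =
  (\sum_(b < N) rowcount (Mper b%:Z) l)%N.
Proof.
rewrite -(big_mkord xpredT (fun t => (sched Mper l t%:Z : nat))).
rewrite -(big_mkord xpredT (fun b => rowcount (Mper b%:Z) l)).
elim: N => [|K IH]; first by rewrite mul0n !big_geq.
rewrite big_nat_recr //= -IH mulSn addnC (big_cat_nat _ (n := K * (T + Dc))) //=; last by lia.
congr (_ + _)%N.
rewrite -sum_entry -(big_mkord xpredT (fun o => (entry_at (Mper K%:Z) l o%:Z : nat))).
have := @big_addn _ 0%N addn 0%N (K * (T + Dc) + (T + Dc))%N (K * (T + Dc))%N xpredT (fun t => (sched Mper l t%:Z : nat)).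
rewrite add0n => ->.
have -> : (K * (T + Dc) + (T + Dc) - K * (T + Dc) = T + Dc)%N by lia.
apply: eq_big_nat => i /andP [_ hi].
by rewrite addnC sched_block.
Qed.
End Per.

End Comb.

Lemma term_le (R : realType) (T g N rc n : nat) (w : R) : (0 < T)%N -> (T <= g)%N -> (0 < N)%N ->
  (rc <= T)%N -> n%:R <= N%:R * w -> N%:R * w < n.+1%:R ->
  T%:R / g%:R * (w * (rc%:R / T%:R)) - (n * rc)%:R / (N * g)%:R <= N%:R^-1.
Proof.
move=> T0 Tg N0 rcT h1 h2.
have g0 : (0 < g)%N by lia.
have T0R : (T%:R : R) != 0 by rewrite pnatr_eq0 -lt0n.
have g0R : (g%:R : R) != 0 by rewrite pnatr_eq0 -lt0n.
have N0R : (N%:R : R) != 0 by rewrite pnatr_eq0 -lt0n.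
have -> : T%:R / g%:R * (w * (rc%:R / T%:R)) - (n * rc)%:R / (N * g)%:R =
    rc%:R * (N%:R * w - n%:R) / (N%:R * g%:R) :> R.
  by rewrite !natrM; field; rewrite T0R g0R N0R.
rewrite ler_pdivrMr ?mulr_gt0 ?ltr0n //.
rewrite mulrA mulVf // mul1r.
have : (rc%:R : R) <= g%:R by rewrite ler_nat; lia.
have : (0 : R) <= rc%:R by [].
move: h2; rewrite -natr1 => h2.
nra.
Qed.

Lemma sum_nth_pad (X : Type) (F : X -> nat) (s : seq X) (N : nat) (x0 : X) :
  F x0 = 0%N -> (size s <= N)%N ->
  (\sum_(b < N) F (nth x0 s b))%N = (\sum_(a <- s) F a)%N.
Proof.
move=> F0 hs; rewrite (big_nth x0) -(big_mkord xpredT (fun b => F (nth x0 s b))).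
rewrite (big_cat_nat _ (n := size s)) //= [X in (_ + X)%N]big1_seq ?addn0 //.
move=> i /andP [_]; rewrite mem_index_iota => /andP [hi _].
by rewrite nth_default.
Qed.

Lemma rowcount_le (L : finType) T (A : bmatrix L T) l : (rowcount A l <= T)%N.
Proof.
rewrite /rowcount; apply: (@leq_trans (\sum_(t < T) 1)%N).
  by apply: leq_sum => i _; exact: leq_b1.
by rewrite sum_nat_const card_ord muln1.
Qed.

Section P1.
Variables (L : finType) (I : L -> {set {set L}}) (D : L -> L -> int) (R : realType).
Local Notation Dc := (character I D).

Definition A0 T : bmatrix L T := [ffun _ => false].
Lemma A0_indep T : independent I D (A0 T).
Proof.
apply/negP => /existsP [l /existsP [t /existsP [phi /andP [_ /andP [+ _]]]]].
by rewrite ffunE.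
Qed.
Definition fixm T (A : bmatrix L T) := if independent I D A then A else A0 T.
Lemma fixm_indep T (A : bmatrix L T) : independent I D (fixm A).
Proof. by rewrite /fixm; case: ifP => // _; exact: A0_indep. Qed.
Lemma rowcount_A0 T l : rowcount (A0 T) l = 0%N.
Proof. by rewrite /rowcount big1 // => i _; rewrite ffunE. Qed.

Lemma P1 T (y : L -> R) : (0 < T)%N -> @scaled_conv_rates L I D R T y ->
  (forall l, 0 <= y l) /\ achievable I D y.
Proof.
move=> T0 [x [w [w0 [wind [w1 hx]]]] <-].
set c := T%:R / (T + Dc)%:R.
have c0 : 0 <= c by rewrite divr_ge0.
have mr0 : forall (A : bmatrix L T) l, 0 <= mrate R A l by move=> A l; rewrite divr_ge0.
have ey : forall l, (c *: x) l = c * x l by [].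
split.
  move=> l; rewrite ey mulr_ge0 // hx; apply: sumr_ge0 => A _.
  by rewrite mulr_ge0.
move=> eps e0.
pose K := #|{: bmatrix L T}|.
pose N := (Num.truncn (K%:R / eps)).+1.
have N0 : (0 < N)%N by [].
pose nA (A : bmatrix L T) := Num.truncn (N%:R * w A).
pose s := flatten [seq nseq (nA A) A | A <- index_enum (bmatrix L T)].
pose Mb b := fixm (nth (A0 T) s b).
pose S := sched I D (Mper N Mb).
have Hind : forall q, independent I D (Mper N Mb q) by move=> q; exact: fixm_indep.
pose g := (T + Dc)%N.
pose C l := (\sum_(t < N * g) (S l t%:Z : nat))%N.
exists S, (fun l => (C l)%:R / (N * g)%:R).
split.
  move=> l.
  have -> : partial_rate I D R S l = (fun n => (\sum_(t < n) (S l t%:Z : nat))%:R / n%:R).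
    apply: funext => n; rewrite /partial_rate natr_sum; congr (_ / _).
    by apply: eq_bigr => t _; rewrite sched_success.
  apply: (@periodic_cvg R (fun t => (S l t%:Z : nat)) (N * g)%N).
  - by rewrite muln_gt0 N0 /g; lia.
  - by move=> n; exact: leq_b1.
  - by move=> n; rewrite /S sched_period.
move=> l.
have hs : (size s <= N)%N.
  rewrite size_flatten /shape -map_comp sumnE big_map.
  rewrite -(ler_nat R) natr_sum.
  apply: (@le_trans _ _ (\sum_(A : bmatrix L T) N%:R * w A)).
    by apply: ler_sum => A _; rewrite /= size_nseq /nA truncn_le mulr_ge0.
  by rewrite -mulr_sumr w1 mulr1.
have hC : C l = (\sum_(A : bmatrix L T) nA A * rowcount A l)%N.
  rewrite /C period_count //.
  transitivity (\sum_(b < N) rowcount (Mb b) l)%N.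
    apply: eq_bigr => b _; rewrite /Mper modz_nat modn_small //.
  rewrite /Mb (@sum_nth_pad _ (fun A => rowcount (fixm A) l) s N (A0 T)) //; last first.
    by rewrite /fixm A0_indep rowcount_A0.
  rewrite big_flatten big_map; apply: eq_bigr => A _.
  rewrite big_nseq iter_addn_0 mulnC /fixm.
  case: ifP => // hA.
  by rewrite /nA wind ?hA // mulr0 truncn0.
rewrite ey hx hC natr_sum mulr_suml mulr_sumr.
have hK : K%:R / N%:R < eps.
  have : K%:R / eps < N%:R by exact: truncnS_gt.
  rewrite ltr_pdivrMr // ltr_pdivrMr ?ltr0n // mulrC.
  by [].
have hsum : \sum_(A : bmatrix L T) (c * (w A * mrate R A l) - (nA A * rowcount A l)%:R / (N * g)%:R)
    <= K%:R / N%:R.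
  apply: (@le_trans _ _ (\sum_(A : bmatrix L T) N%:R^-1)).
    apply: ler_sum => A _.
    rewrite /c /mrate -/(rowcount A l).
    apply: term_le => //.
    - by rewrite /g; lia.
    - exact: rowcount_le.
    - by rewrite /nA truncn_le mulr_ge0.
    - exact: truncnS_gt.
  by rewrite sumr_const mulr_natl.
move: hsum; rewrite sumrB; lra.
Qed.
End P1.

Lemma P2_arith (R : realType) (a r eps : R) (T Dc cn fl : nat) :
  (0 < T)%N -> 0 < eps -> 0 <= a -> a - eps / 4 <= r -> `|r - cn%:R / T%:R| < eps / 4 ->
  (cn <= T)%N -> fl%:R <= a * (T + Dc)%N%:R -> a * (T + Dc)%N%:R < fl.+1%:R ->
  (Dc.+1)%:R / T%:R < eps / 4 ->
  `|a - T%:R / (T + Dc)%N%:R * ((minn cn fl)%:R / T%:R)| < eps.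
Proof.
move=> T0 e0 a0 har hr hcn hfl1 hfl2 hD.
have tR : (0 : R) < T%:R by rewrite ltr0n.
have nR : (0 : R) < (T + Dc)%N%:R by rewrite ltr0n; lia.
have -> : T%:R / (T + Dc)%N%:R * ((minn cn fl)%:R / T%:R) = (minn cn fl)%:R / (T + Dc)%N%:R :> R.
  by field; rewrite -natrD !pnatr_eq0; lia.
have hk1 : ((minn cn fl)%:R : R) <= fl%:R by rewrite ler_nat geq_minr.
have hn : ((T + Dc)%N%:R : R) = T%:R + Dc%:R by rewrite natrD.
have hD' : (Dc%:R + 1) * 4 < eps * T%:R :> R.
  by move: hD; rewrite ltr_pdivrMr // -natr1 => h; lra.
rewrite ger0_norm; last first.
  by rewrite subr_ge0 ler_pdivrMr //; apply: le_trans hk1 hfl1.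
rewrite ltrBlDl -ltrBlDr ltr_pdivlMr // mulrBl.
have [hm|hm] := leqP cn fl.

  have hu : (r - eps / 4) * T%:R < cn%:R.
    rewrite -ltr_pdivlMr //.
    by move: hr; rewrite ltr_norml => /andP [_]; lra.
  have hcnR : (cn%:R : R) <= T%:R by rewrite ler_nat.
  have ha1 : a <= 1 + eps / 2.
    have : cn%:R / T%:R <= (1 : R) by rewrite ler_pdivrMr // mul1r.
    move: hr; rewrite ltr_norml => /andP [_ h1]; lra.
  rewrite hn.
  have h2 : a * Dc%:R <= (1 + eps / 2) * Dc%:R by apply: ler_wpM2r; rewrite ?ler0n.
  have h3 : (a - eps / 2) * T%:R <= (r - eps / 4) * T%:R by apply: ler_wpM2r; rewrite ?ler0n //; lra.
  have h4 : 0 <= eps * Dc%:R by rewrite mulr_ge0 // ltW.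
  have h5 : (0 : R) <= Dc%:R by [].
  move: hu h2 h3; rewrite !mulrBl !mulrDl mul1r !mulrDr => hu h2 h3.
  nra.
move: hfl2; rewrite -natr1 hn !mulrDr => hfl2.
have h4 : 0 <= eps * Dc%:R by rewrite mulr_ge0 // ltW.
have h5 : (0 : R) <= Dc%:R by [].
lra.
Qed.

Section P2.
Variables (L : finType) (I : L -> {set {set L}}) (D : L -> L -> int) (R : realType).
Local Notation Dc := (character I D).

Lemma P2 (x : L -> R) eps : rate_region I D x -> 0 < eps ->
  exists T, (1 <= T)%N /\ exists2 y, @scaled_conv_rates L I D R T y & forall l, `|x l - y l| < eps.
Proof.
move=> [x0 hach] e0.
have e4 : 0 < eps / 4 by rewrite divr_gt0.
have [S [r [hr hxr]]] := hach _ e4.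
have : \forall n \near \oo, forall l, `|r l - partial_rate I D R S l n| < eps / 4.
  apply: filter_forall => l.
  exact: (cvgrPdist_lt _ _).1 (hr l) _ e4.
move=> [N1 _ HN1].
pose T1 := (Num.truncn ((Dc.+1)%:R * 4 / eps)).+1.
pose T := maxn N1 (maxn 1 T1).
have T0 : (0 < T)%N by rewrite /T; lia.
have hN : (N1 <= T)%N by rewrite /T; lia.
have hD : (Dc.+1)%:R / T%:R < eps / 4.
  have h1 : (Dc.+1)%:R * 4 / eps < T%:R.
    apply: lt_le_trans (truncnS_gt _) _; rewrite ler_nat; exact: leq_trans (leq_maxr 1 _) (leq_maxr N1 _).
  rewrite ltr_pdivrMr ?ltr0n //.
  move: h1; rewrite ltr_pdivrMr // => h1.
  rewrite mulrAC ltr_pdivlMr //; lra.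
pose f l t := success I D S l t%:Z.
pose cnt l := (\sum_(t < T) (f l t : nat))%N.
pose n := (T + Dc)%N.
pose k l := minn (cnt l) (Num.truncn (x l * n%:R)).
have /choice [m hm] : forall l, exists m, (m <= T)%N /\ (\sum_(t < m) (f l t : nat))%N = k l.
  move=> l; have [m h1 h2] := @prefix_hit (f l) T (k l) (geq_minl _ _).
  by exists m.
pose A : bmatrix L T := [ffun p : L * 'I_T => f p.1 (p.2 : nat) && ((p.2 : nat) < m p.1)%N].
have Aind : independent I D A.
  by apply: (@indep_of_success _ I D T S A) => l0 t0; rewrite ffunE => /andP [].
have Arow : forall l, rowcount A l = k l.
  move=> l; rewrite /rowcount.
  under eq_bigr do rewrite ffunE /=.
  by rewrite (@trunc_sum (f l) T (m l)) ?(proj1 (hm l)) // (proj2 (hm l)).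
have hdelta : forall F : bmatrix L T -> R, \sum_(B : bmatrix L T) (B == A)%:R * F B = F A.
  move=> F; rewrite (bigD1 A) //= eqxx mul1r big1 ?addr0 // => B /negbTE ->.
  by rewrite mul0r.
exists T; split => //.
exists (T%:R / n%:R *: mrate R A).
  exists (mrate R A) => //.
  exists (fun B => (B == A)%:R); split; first by move=> B; rewrite ler0n.
  split; first by move=> B; case: eqP => // ->; rewrite Aind.
  split; last by move=> l; rewrite hdelta.
  by have := hdelta (fun=> 1); under eq_bigr do rewrite mulr1; move=> ->.
move=> l.
have -> : (T%:R / n%:R *: mrate R A) l = T%:R / n%:R * ((rowcount A l)%:R / T%:R) by [].
rewrite Arow /k.
apply: P2_arith => //.
- have := HN1 T hN l.
  by rewrite /partial_rate -natr_sum.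
- rewrite /cnt; apply: (@leq_trans (\sum_(t < T) 1)%N).
    by apply: leq_sum => i _; exact: leq_b1.
  by rewrite sum_nat_const card_ord muln1.
- by rewrite truncn_le mulr_ge0.
- exact: truncnS_gt.
Qed.
End P2.


Theorem theorem2 (R : realType) (L : finType) (I : L -> {set {set L}})
    (D : L -> L -> int)
    (hL : (0 < #|L|)%N)
    (hI : forall l (phi : {set L}), phi \in I l -> phi != finset.set0) :
  @rate_region L I D R =
  closure ((\bigcup_(T in [set n : nat | (1 <= n)%N]) @scaled_conv_rates L I D R T)
             : set {ptws L -> R}).
Proof.
apply/seteqP; split => x.
  move=> hx; apply/closure_box => eps e0.
  have [T [T1 [y hy hb]]] := P2 hx e0.
  by exists y; split => //; exists T.
move=> /closure_box hc; split.
  move=> l; rewrite leNgt; apply/negP => hneg.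
  have hx0 : 0 < - x l by rewrite oppr_gt0.
  have [y [[T T1 hy] hb]] := hc (- x l) hx0.
  have [hy0 _] := P1 T1 hy.
  have := hb l; have := hy0 l; rewrite ltr_norml => h1 /andP [h2 h3].
  lra.
move=> eps e0.
have e2 : 0 < eps / 2 by rewrite divr_gt0.
have [y [[T T1 hy] hb]] := hc _ e2.
have [_ ha] := P1 T1 hy.
have [S [r [hr hle]]] := ha _ e2.
exists S, r; split => // l.
have := hb l; have := hle l; rewrite ltr_norml => h1 /andP [h2 h3].
lra.
Qed.
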